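(* For every real skew-symmetric matrix $S$ there exist real orthogonal matrices $Q_1,Q_2$ and a positive number $c\ge\lambda_{\max}(S)/2$ such that $S=c\,(Q_1+Q_2)$, where $\lambda_{\max}(S)$ is the maximum singular value of $S$. *)

(* Defs.v *)
From mathcomp Require Import all_boot all_order all_algebra.
From mathcomp Require Import reals.
Set Implicit Arguments. Unset Strict Implicit. Unset Printing Implicit Defensive.
Import Order.TTheory GRing.Theory Num.Theory.
Local Open Scope ring_scope.

Definition skew_symmetric (R : realType) (n : nat) (S : 'M[R]_n) : Prop :=
  S^T = - S.

Definition orthogonal_mx (R : realType) (n : nat) (Q : 'M[R]_n) : Prop :=
  Q *m Q^T = 1%:M.

Definition singular_value (R : realType) (n : nat) (A : 'M[R]_n) (s : R) : Prop :=
  0 <= s /\ eigenvalue (A^T *m A) (s ^+ 2).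

Definition max_singular_value (R : realType) (n : nat) (A : 'M[R]_n) (s : R) : Prop :=
  singular_value A s /\ forall t, singular_value A t -> t <= s.

(* Main.v *)
Require Import Defs.
From mathcomp Require Import all_boot all_order all_algebra.
From mathcomp Require Import reals complex.
From mathcomp.algebra_tactics Require Import ring lra.
Import Order.TTheory GRing.Theory Num.Theory.
Local Open Scope ring_scope.

Lemma conj_rc (R : rcfType) (x : R) : Num.conj (x%:C)%C = (x%:C)%C.
Proof.
apply: conj_Creal.
have : x \is Num.real by apply: num_real.
rewrite !realE !lecE /= !eqxx /=.
by [].
Qed.

Lemma annihil {R : rcfType} {n} (B : 'M[R]_n.+1) : B^T = B ->
  exists s : seq R, uniq s /\ horner_mx B (\prod_(x <- s) ('X - x%:P)) = 0.
Proof.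
move=> Bsym.
pose BC := map_mx (real_complex R) B.
have herm : BC \is hermsymmx.
  apply/is_hermitianmxP; rewrite expr0 scale1r.
  apply/matrixP => i j; rewrite !mxE conj_rc -{1}Bsym mxE //.
have /orthomx_spectralP BCE := hermitian_normalmx herm.
have /mxOverP dreal := hermitian_spectral_diag_real herm.
move: BCE dreal.
set d := spectral_diag BC; set P := spectralmx BC => BCE dreal.
exists (undup [seq complex.Re (d 0 j) | j <- enum 'I_n.+1]); split; first exact: undup_uniq.
have inj := @map_mx_inj R _ (real_complex R) n.+1 n.+1. apply: inj.
rewrite map_horner_mx map_mx0 -/BC BCE horner_mx_uconjC ?spectral_unit //.
rewrite horner_mx_diag.
suff -> : map_mx (horner (map_poly (real_complex R)
     (\prod_(x <- undup [seq complex.Re (d 0 j) | j <- enum 'I_n.+1]) ('X - x%:P)))) d = 0.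
  have -> : diag_mx (0 : 'rV[R[i]]_n.+1) = 0 by apply/matrixP => ? ?; rewrite !mxE mul0rn.
  by rewrite mulmx0 mul0mx.
apply/matrixP => i j; rewrite !mxE.
rewrite rmorph_prod /=.
under eq_bigr do rewrite map_polyXsubC.
rewrite -(big_map (real_complex R) xpredT (fun y => 'X - y%:P)).
apply/eqP; rewrite -/(root _ _) root_prod_XsubC.
have -> : d i j = (complex.Re (d 0 j))%:C%C.
  by rewrite ord1 complexRe; apply/esym/Creal_ReP/dreal.
by apply: map_f; rewrite mem_undup; apply: map_f; rewrite mem_enum.
Qed.
Lemma interp (F : fieldType) (s : seq F) (f : F -> F) : uniq s ->
  exists p : {poly F}, forall x, x \in s -> p.[x] = f x.
Proof.
elim: s => [|x s IH] /=; first by move=> _; exists 0.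
move=> /andP[xs us]; have [p Hp] := IH us.
pose q := \prod_(y <- s) ('X - y%:P).
have qx : q.[x] != 0.
  by rewrite -/(root _ _) /q root_prod_XsubC.
exists (p + ((f x - p.[x]) / q.[x]) *: q) => y; rewrite inE => /orP[/eqP->|ys].
  by rewrite hornerD hornerZ mulfVK // addrC subrK.
have : root q y by rewrite /q root_prod_XsubC.
by rewrite hornerD hornerZ => /eqP->; rewrite mulr0 addr0 Hp.
Qed.

Lemma eig_horner (F : fieldType) n (B : 'M[F]_n.+1) (v : 'rV_n.+1) a p :
  v *m B = a *: v -> v *m horner_mx B p = p.[a] *: v.
Proof.
move=> vB; elim/poly_ind: p => [|p c IH].
  by rewrite rmorph0 mulmx0 horner0 scale0r.
rewrite rmorphD rmorphM /= horner_mx_X horner_mx_C hornerE.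
rewrite mulmxDr -mulmxE mulmxA IH -scalemxAl vB scalerA mul_mx_scalar.
by rewrite hornerMX hornerC scalerDl.
Qed.

Lemma tr_horner (F : comNzRingType) n (B : 'M[F]_n.+1) p :
  (horner_mx B p)^T = horner_mx B^T p.
Proof.
elim/poly_ind: p => [|p c IH]; first by rewrite !rmorph0 trmx0.
rewrite !rmorphD !rmorphM /= !horner_mx_X !horner_mx_C linearD /= tr_scalar_mx.
rewrite -!mulmxE trmx_mul IH; congr (_ + _).
by have := comm_mx_horner p (comm_mx_refl B^T); rewrite /comm_mx.
Qed.

Lemma scal1 (R : realFieldType) (c x : R) : 0 < c -> `|x| <= c^+2 ->
  0 <= 1 + (4 * c^+2)^-1 * x.
Proof.
move=> c0 h; have hx := ler_norm (- x); rewrite normrN in hx.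
have c2 : 0 < 4 * c ^+ 2 by nra.
have -> : 1 + (4 * c^+2)^-1 * x = (4 * c^+2)^-1 * (4 * c ^+ 2 + x).
  by field; lra.
apply: mulr_ge0; first by rewrite invr_ge0; lra.
nra.
Qed.

Lemma scal2 (R : realFieldType) (c sm : R) : 0 < c -> 0 <= sm -> sm^+2 <= c^+2 ->
  sm / 2 <= c.
Proof. move=> *; nra. Qed.

Lemma scal3 (R : realFieldType) (c : R) : 0 < c ->
  2^-1 * c^-1 * (2^-1 * c^-1) = (4 * c ^+ 2)^-1.
Proof. by move=> c0; field; lra. Qed.

Lemma scal4 (R : realFieldType) (c : R) : (2^-1 + 2^-1) * c^-1 = c^-1.
Proof. have -> : (2^-1 + 2^-1 : R) = 1 by field. by rewrite mul1r. Qed.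

Lemma zm (V : zmodType) (X Y Z : V) : -X - Y - (-Y - (Z + X)) = Z.
Proof. rewrite !opprD !opprK !addrA subrK addrAC addNr add0r //. Qed.

Lemma scal5 (R : realFieldType) : (2^-1 + 2^-1 : R) = 1.
Proof. by field. Qed.

Theorem mainTheorem18 (R : realType) (n : nat) (S : 'M[R]_n) :
  skew_symmetric S ->
  exists (Q1 Q2 : 'M[R]_n) (c : R),
    [/\ orthogonal_mx Q1, orthogonal_mx Q2, 0 < c,
        (forall smax, max_singular_value S smax -> smax / 2 <= c) &
        S = c *: (Q1 + Q2)].
Proof.
case: n S => [|n] S Sskew.
  exists 0, 0, 1; split => //.
  - by apply/matrixP => -[].
  - by apply/matrixP => -[].
  - move=> sm [[_ /eigenvalueP [v _ vnz]] _].
    by move: vnz; rewrite [v]thinmx0 eqxx.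
  - by rewrite [S]flatmx0 [RHS]flatmx0.
rewrite /skew_symmetric in Sskew.
pose B0 := S *m S.
have B0sym : B0^T = B0 by rewrite /B0 trmx_mul Sskew mulNmx mulmxN opprK.
have [s [us hm]] := annihil B0 B0sym.
pose c : R := 1 + \sum_(x <- s) `|x|.
have sum0 : 0 <= \sum_(x <- s) `|x| by apply: sumr_ge0 => x _.
have c1 : 1 <= c by rewrite /c lerDl.
have c0 : 0 < c by apply: lt_le_trans c1.
have xc : forall x, x \in s -> `|x| <= c ^+ 2.
  move=> x xs.
  have : `|x| <= \sum_(y <- s) `|y|.
    by rewrite (perm_big _ (perm_to_rem xs)) big_cons lerDl sumr_ge0.
  rewrite /c in c1 c0 *; move: sum0; set t := \sum_(_ <- _) _ => ??; nra.
pose k := (4 * c ^+ 2)^-1.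
pose f (x : R) : R := Num.sqrt (1 + k * x).
have [p Hp] := @interp R s f us.
pose N := horner_mx B0 p.
have Nsym : N^T = N by rewrite tr_horner B0sym.
have NS : S *m N = N *m S.
  by apply: comm_mx_horner; rewrite /comm_mx /B0 mulmxA.
have NN : N *m N = 1%:M + k *: B0.
  pose r := p * p - (1 + k *: 'X).
  have : \prod_(x <- s) ('X - x%:P) %| r.
    apply: uniq_roots_dvdp; last by rewrite uniq_rootsE.
    apply/allP => x xs; rewrite /root /r !hornerE Hp // /f.
    rewrite -expr2 sqr_sqrtr ?subrr //.
    exact: scal1 (xc x xs).
  case/dvdpP => q rq.
  have := congr1 (horner_mx B0) rq.
  rewrite rmorphM /= hm mulr0 /r rmorphB rmorphM rmorphD /= rmorph1 linearZ /= horner_mx_X.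
  by move/eqP; rewrite subr_eq0 -mulmxE => /eqP ->.
pose A := c^-1 *: S.
pose a := 2^-1 *: A.
have aT : a^T = - a by rewrite /a /A !linearZ /= Sskew !scalerN.
have aN : a *m N = N *m a by rewrite /a /A -!scalemxAl -!scalemxAr NS.
have aa : a *m a = k *: B0.
  rewrite /a /A -!scalemxAl -!scalemxAr !scalerA /B0; congr (_ *: _).
  by rewrite /k scal3.
exists (a + N), (a - N), c; split => //.
- rewrite /orthogonal_mx linearD /= aT Nsym mulmxDl !mulmxDr NN aN mulmxN aa.
  by rewrite mulmxN addrA addrK addrC addrK.
- rewrite /orthogonal_mx linearB /= aT Nsym mulmxBl !mulmxBr !mulmxN aa NN -aN.
  exact: zm.
- move=> sm [[sm0 /eigenvalueP [v vE vnz]] _].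
  rewrite Sskew mulNmx mulmxN -/B0 in vE.
  have vB : v *m B0 = (- sm ^+ 2) *: v by rewrite scaleNr -vE opprK.
  have := @eig_horner R n B0 v _ (\prod_(x <- s) ('X - x%:P)) vB.
  rewrite hm mulmx0 => /esym/eqP; rewrite scaler_eq0 (negPf vnz) orbF.
  rewrite -/(root _ _) root_prod_XsubC => /xc.
  rewrite normrN ger0_norm ?sqr_ge0 // => h.
  exact: scal2.
- rewrite addrACA subrr addr0 /a -scalerDl /A scalerA.
  by rewrite scal5 mulr1 scalerA mulfV ?gt_eqF // scale1r.
Qed.
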